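(* For any $n\ge0$ and $q\ge1$, let $\mathcal{A}^+$ (resp. $\mathcal{A}^-$) be the set of words of $\mathcal{W}^q_n$ having an even (resp. odd) number of letters $1$. Then $|\mathcal{A}^+|-|\mathcal{A}^-|\in\{-1,0,1\}$.
   Context: For $q\ge1$, a binary word is $q$-decreasing if for every maximal run of $0$s, of length $a>0$, together with the (possibly empty) maximal run of $1$s immediately following it, of length $b$, one has $q\cdot a>b$; $\mathcal{W}^q_n$ is the set of $q$-decreasing words of length $n$. *)

(* Defs.v *)
From mathcomp Require Import all_boot all_order all_algebra.
Set Implicit Arguments. Unset Strict Implicit. Unset Printing Implicit Defensive.

(* Binary words are sequences of booleans: false = letter 0, true = letter 1. *)

(* [qdec q w]: for every decomposition w = u ++ 0^a ++ 1^b ++ v with a > 0,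
   where the run 0^a is a maximal run of 0s (u is empty or ends with 1, and
   the letter after the zeros, if any, is 1) and 1^b is the maximal (possibly
   empty) run of 1s following it (v is empty or starts with 0), we have
   q * a > b. *)
Definition qdec (q : nat) (w : seq bool) : bool :=
  [forall i : 'I_(size w).+1, forall a : 'I_(size w).+1, forall b : 'I_(size w).+1,
    let u := take i w in
    let r := drop i w in
    let v := drop (a + b) r in
    [&& 0 < a,
        take (a + b) r == nseq a false ++ nseq b true,
        last true u,
        head true (nseq b true ++ v) &
        ~~ head false v]
    ==> (b < q * a)].

Definition Wq (q n : nat) : {set n.-tuple bool} :=
  [set w : n.-tuple bool | qdec q w].

Definition Aplus (q n : nat) : {set n.-tuple bool} :=
  [set w in Wq q n | ~~ odd (count id w)].
Definition Aminus (q n : nat) : {set n.-tuple bool} :=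
  [set w in Wq q n | odd (count id w)].

(* Main.v *)
Require Import Defs.
From mathcomp Require Import all_boot all_order all_algebra.
From mathcomp Require Import zify.


Definition stp (s : nat * nat) (x : bool) : nat * nat :=
  if x then (s.1, s.2.+1) else (if s.2 == 0 then (s.1.+1, 0) else (1, 0)).
Definition st (w : seq bool) := foldl stp (0, 0) w.

Lemma st_rcons u x : st (rcons u x) = stp (st u) x.
Proof. by rewrite /st foldl_rcons. Qed.

Lemma nseqSr T n (x : T) : nseq n.+1 x = rcons (nseq n x) x.
Proof. by rewrite -cats1 -addn1 nseqD. Qed.
Arguments nseqSr {T} n x.

Lemma st_a0 u : (st u).1 = 0 -> u = nseq (st u).2 true.
Proof.
elim/last_ind: u => [//|u x IH].
rewrite st_rcons /stp; case: x => /=.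
  by move=> /IH {1}->; rewrite -nseqSr.
by case: ifP.
Qed.

Lemma st_b_last u : 0 < (st u).2 -> last true u.
Proof.
elim/last_ind: u => [//|u x IH].
rewrite st_rcons /stp last_rcons; case: x => //=.
by case: ifP.
Qed.

Lemma st_decomp u : 0 < (st u).1 ->
  exists U, u = U ++ nseq (st u).1 false ++ nseq (st u).2 true /\ last true U.
Proof.
elim/last_ind: u => [//|u x IH].
rewrite st_rcons /stp; case: x => /=.
  move=> /IH [U [Hu HU]]; exists U; split=> //.
  by rewrite {1}Hu !rcons_cat -nseqSr.
case: eqP => Hb /=.
  case: (posnP (st u).1) => Ha _.
    have := st_a0 _ Ha; rewrite Hb /= => ->.
    by exists [::].
  have [U [Hu HU]] := IH Ha.
  exists U; split=> //.
  by rewrite {1}Hu Hb /= !cats0 rcons_cat -nseqSr.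
move=> _; exists u; split; last first.
  by apply: st_b_last; case: ((st u).2) Hb.
by rewrite /= cats1.
Qed.

Lemma st_nseq_false c k : 0 < c -> foldl stp (c, 0) (nseq k false) = (c + k, 0).
Proof.
elim: k c => [|k IH] c Hc /=; first by rewrite addn0.
by rewrite /stp /= IH // addnS.
Qed.

Lemma st_nseq_true c d k : foldl stp (c, d) (nseq k true) = (c, d + k).
Proof.
elim: k d => [|k IH] d /=; first by rewrite addn0.
by rewrite /stp /= IH addnS.
Qed.

Lemma st_last_false U : last true U -> stp (st U) false = (1, 0).
Proof.
elim/last_ind: U => [//|U x _].
by rewrite last_rcons => ->; rewrite st_rcons /stp /=.
Qed.

Lemma st_block U a b : last true U -> 0 < a ->
  st (U ++ nseq a false ++ nseq b true) = (a, b).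
Proof.
move=> HU; case: a => // a _.
rewrite /st foldl_cat -/(st U) /= foldl_cat.
rewrite -/(stp (st U) false) st_last_false // st_nseq_false // st_nseq_true.
by rewrite add1n.
Qed.

Lemma st_size u : (st u).1 + (st u).2 <= size u.
Proof.
elim/last_ind: u => [//|u x IH].
rewrite st_rcons size_rcons /stp; case: x => /=.
  by rewrite addnS ltnS.
by case: ifP => _ /=; lia.
Qed.


Lemma rcons_inj2 {T : Type} {s1 s2 : seq T} {x1 x2} :
  rcons s1 x1 = rcons s2 x2 -> s1 = s2 /\ x1 = x2.
Proof. by move/rcons_inj => [-> ->]. Qed.

Definition Pq q (w : seq bool) := forall U a b V,
  w = U ++ nseq a false ++ nseq b true ++ V -> 0 < a -> last true U ->
  (0 < b) || (V == [::]) -> ~~ head false V -> b < q * a.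

Lemma qdecP q w : qdec q w <-> Pq q w.
Proof.
split.
  move=> H U a b V Hw Ha HU Hb HV.
  have Hs : size w = size U + a + b + size V by rewrite Hw !size_cat !size_nseq; lia.
  have si : size U < (size w).+1 by lia.
  have sa : a < (size w).+1 by lia.
  have sb : b < (size w).+1 by lia.
  move/forallP: H => /(_ (Ordinal si)) /forallP /(_ (Ordinal sa)) /forallP
    /(_ (Ordinal sb)) /implyP; apply => /=.
  have E1 : drop (size U) w = (nseq a false ++ nseq b true) ++ V
    by rewrite Hw drop_size_cat // catA.
  have E2 : take (size U) w = U by rewrite Hw take_size_cat.
  rewrite E1 E2 take_size_cat ?drop_size_cat ?size_cat ?size_nseq // Ha HU eqxx HV /=.
  clear E1; case: b Hb {Hs sb Hw} => [|b] /= Hb; last by [].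
  by move/eqP: Hb => ->.
move=> H; apply/forallP => i; apply/forallP => a; apply/forallP => b.
apply/implyP => /and5P [Ha /eqP Ht HU Hh HV].
apply: (H (take i w) a b (drop (a+b) (drop i w))) => //.
  by rewrite [nseq a false ++ _]catA -Ht !cat_take_drop.
move: Hh HV; case: (drop _ _) => [|x V]; first by rewrite orbT.
case: (nat_of_ord b) => //= Hx; by rewrite Hx.
Qed.

Lemma qdec_cat_false q U a : 0 < q -> qdec q (U ++ nseq a false) = qdec q U.
Proof.
move=> Hq; elim: a => [|a IH]; first by rewrite cats0.
rewrite nseqSr -rcons_cat -IH.
apply/idP/idP; rewrite !qdecP => H.
  move=> U' a' b V Hu Ha HU Hb HV.
  case: (posnP b) => [->|bpos]; first by rewrite muln_gt0 Hq Ha.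
  apply: (H U' a' b (rcons V false)) => //.
      by rewrite Hu !rcons_cat.
    by rewrite bpos.
  by case: V {Hu Hb} HV.
move=> U' a' b V Hu Ha HU Hb HV.
case/lastP E: V Hu Hb HV => [|V' y] Hu Hb HV.
  case: b Hu Hb {HV} => [|b] Hu _; first by rewrite muln_gt0 Hq Ha.
  move: Hu; rewrite nseqSr cats0 -!rcons_cat => /rcons_inj2 [_] //.
move: Hu; rewrite -!rcons_cat => /rcons_inj2 [Hu _].
apply: (H U' a' b V') => //.
  by case: b Hb {Hu} => //; case: V' {E HV}.
by case: V' {E Hu Hb} HV.
Qed.

Lemma qdec_rcons_false q u : 0 < q -> qdec q (rcons u false) = qdec q u.
Proof. by move=> Hq; rewrite -cats1 (qdec_cat_false q u 1 Hq). Qed.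

Definition good q (s : nat * nat) := (s.1 == 0) || (s.2 < q * s.1).

Lemma qdec_rcons_true q u : 0 < q ->
  qdec q (rcons u true) = qdec q u && good q ((st u).1, (st u).2.+1).
Proof.
move=> Hq; apply/idP/idP.
  rewrite qdecP => H; apply/andP; split.
    apply/qdecP => U a b V Hu Ha HU Hb HV.
    case: (posnP b) => [->|bpos]; first by rewrite muln_gt0 Hq Ha.
    case: V Hu Hb HV => [|x V] Hu Hb HV.
      apply: ltnW; apply: (H U a b.+1 [::]) => //.
      by rewrite Hu !cats0 nseqSr !rcons_cat.
    apply: (H U a b (rcons (x :: V) true)) => //.
      by rewrite Hu !rcons_cat.
  rewrite /good /=; case: (posnP (st u).1) => [->//|Ha].
  have [U [Hu HU]] := st_decomp _ Ha.
  apply/orP; right; apply: (H U (st u).1 (st u).2.+1 [::]) => //.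
  by rewrite {1}Hu cats0 nseqSr !rcons_cat.
case/andP => Hu0 Hg; apply/qdecP => U a b V Hu Ha HU Hb HV.
case/lastP E: V Hu Hb HV => [|V' y] Hu Hb HV.
  case: b Hu Hb {HV} => [|b] Hu _; first by rewrite muln_gt0 Hq Ha.
  move: Hu; rewrite nseqSr cats0 -!rcons_cat => /rcons_inj2 [Hu _].
  move: Hg; rewrite Hu st_block // /good /=.
  by case: a Ha {Hu}.
move: Hu; rewrite -!rcons_cat => /rcons_inj2 [Hu Hy].
case: V' E Hu HV Hb => [|x V'] E Hu HV Hb.
  by move: HV; rewrite /= -Hy.
move/qdecP: Hu0; apply; [exact Hu | done | done | done | by []].
Qed.

Lemma qdec_good q u : qdec q u -> good q (st u).
Proof.
rewrite qdecP /good => H; case: (posnP (st u).1) => [->//|Ha].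
have [U [Hu HU]] := st_decomp _ Ha.
apply/orP; right; apply: (H U _ _ [::]) => //.
  by rewrite cats0.
by rewrite eqxx orbT.
Qed.

Lemma qdec_block q U a j : 0 < q -> last true U -> 0 < a -> j < q * a ->
  qdec q (U ++ nseq a false ++ nseq j true) = qdec q U.
Proof.
move=> Hq HU Ha; elim: j => [|j IH] Hj.
  by rewrite cats0 qdec_cat_false.
rewrite nseqSr -!rcons_cat qdec_rcons_true // IH ?(ltnW Hj) //.
by rewrite st_block // /good /= Hj orbT andbT.
Qed.

Import GRing.Theory Num.Theory.
Local Open Scope ring_scope.

Fixpoint allw n : seq (seq bool) :=
  if n is n'.+1 then map (rcons^~ false) (allw n') ++ map (rcons^~ true) (allw n')
  else [:: [::]].

Lemma mem_rcons_map (L : seq (seq bool)) w x y :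
  (rcons w x \in map (rcons^~ y) L) = (x == y) && (w \in L).
Proof.
apply/mapP/andP => [[w' Hw' /rcons_inj2 [-> ->]]|[/eqP -> H]]; first by rewrite eqxx.
by exists w.
Qed.

Lemma mem_allw n w : (w \in allw n) = (size w == n).
Proof.
elim: n w => [|n IH] w /=.
  by rewrite inE size_eq0.
case/lastP: w => [|w x].
  rewrite mem_cat; apply/negbTE; apply/orP => [] [] /mapP [u _].
    by case: u.
  by case: u.
rewrite mem_cat !mem_rcons_map IH size_rcons eqSS.
by case: x; case: (size w == n).
Qed.

Lemma uniq_allw n : uniq (allw n).
Proof.
elim: n => [//|n IH] /=.
rewrite cat_uniq !(map_inj_uniq (@rcons_injl _ _)) IH /= andbT.
apply/hasPn => w /mapP [u _ ->]; by rewrite mem_rcons_map.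
Qed.

Definition sgn (w : seq bool) : int := (-1) ^+ (count id w).

Lemma sgn_rcons u x : sgn (rcons u x) = sgn u * (-1) ^+ x.
Proof. by rewrite /sgn -cats1 count_cat exprD /=; case: x. Qed.

Lemma sum_tuple n (F : seq bool -> int) :
  \sum_(t : n.-tuple bool) F (val t) = \sum_(w <- allw n) F w.
Proof.
rewrite -(big_map val xpredT F); apply: perm_big; apply: uniq_perm.
- by rewrite (map_inj_uniq val_inj) // index_enum_uniq.
- exact: uniq_allw.
move=> w; rewrite mem_allw; apply/mapP/idP => [[t _ ->]|H].
  by rewrite size_tuple.
by exists (Tuple H); rewrite // mem_index_enum.
Qed.

Lemma reindex_allw (k m : nat) (g : seq bool -> seq bool) (P Q : pred (seq bool))
  (F : seq bool -> int) :
  injective g -> (forall U, size U = k -> size (g U) = m) ->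
  (forall U, size U = k -> Q U -> P (g U)) ->
  (forall u, size u = m -> P u -> exists2 U, (size U == k) && Q U & u = g U) ->
  \sum_(u <- allw m | P u) F u = \sum_(U <- allw k | Q U) F (g U).
Proof.
move=> ginj gs gP Pg.
rewrite -big_filter -[RHS]big_filter -(big_map g xpredT F); apply: perm_big.
apply: uniq_perm.
- by rewrite filter_uniq // uniq_allw.
- by rewrite (map_inj_uniq ginj) // filter_uniq // uniq_allw.
move=> u; rewrite mem_filter mem_allw; apply/andP/mapP.
  move=> [Hp /eqP Hs]; have [U /andP [/eqP HU HQ] ->] := Pg u Hs Hp.
  by exists U => //; rewrite mem_filter mem_allw HQ HU eqxx.
move=> [U]; rewrite mem_filter mem_allw => /andP [HQ /eqP HU] ->.
by rewrite gP // gs // eqxx.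
Qed.


Section Count.
Variable q : nat.
Hypothesis Hq : (0 < q)%N.

Definition g1 (u : seq bool) := good q ((st u).1, (st u).2.+1).
Definition Dn n := \sum_(w <- allw n | qdec q w) sgn w.
Definition Vn n := \sum_(w <- allw n | qdec q w && last true w) sgn w.
Definition En n := \sum_(u <- allw n | qdec q u && g1 u) sgn u.
Definition Xn n := \sum_(u <- allw n | qdec q u && ~~ g1 u) sgn u.
Definition Sa a n := \sum_(u <- allw n | qdec q u && (0 < a)%N && (st u == (a, q*a-1)%N)) sgn u.

Lemma sum_allwS n (P : pred (seq bool)) (F : seq bool -> int) :
  \sum_(w <- allw n.+1 | P w) F w =
  \sum_(u <- allw n | P (rcons u false)) F (rcons u false) +
  \sum_(u <- allw n | P (rcons u true)) F (rcons u true).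
Proof. by rewrite /= big_cat !big_map. Qed.

Lemma D_S n : Dn n.+1 = Dn n - En n.
Proof.
rewrite /Dn /En sum_allwS; congr (_ + _).
  apply: eq_big => [u|u _]; first by rewrite qdec_rcons_false.
  by rewrite sgn_rcons mulr1.
rewrite -sumrN; apply: eq_big => [u|u _]; first by rewrite qdec_rcons_true.
by rewrite sgn_rcons mulrN1.
Qed.

Lemma V_S n : Vn n.+1 = - En n.
Proof.
rewrite /Vn /En sum_allwS.
rewrite [X in X + _]big_mkcond big1 ?add0r => [|u _]; last by rewrite last_rcons andbF.
rewrite -sumrN; apply: eq_big => [u|u _].
  by rewrite last_rcons andbT qdec_rcons_true.
by rewrite sgn_rcons mulrN1.
Qed.

Lemma D_EX n : Dn n = En n + Xn n.
Proof. by rewrite /Dn (bigID g1). Qed.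

Lemma D_X n : Dn n.+1 = Xn n.
Proof. by rewrite D_S D_EX addrC addKr. Qed.

Lemma V_D n : Vn n.+1 = Dn n.+1 - Dn n.
Proof. by rewrite V_S D_S addrAC subrr add0r. Qed.

Lemma X_sum n : Xn n = \sum_(a < n.+1) Sa a n.
Proof.
rewrite /Xn /Sa.
under [RHS]eq_bigr do rewrite big_mkcond.
rewrite exchange_big /= big_mkcond; apply: eq_big_seq => u.
rewrite mem_allw => /eqP Hs.
have Ha : ((st u).1 < n.+1)%N.
  move: (st_size u); rewrite Hs; lia.
rewrite (bigD1 (Ordinal Ha)) //= big1 ?addr0; last first.
  move=> a Hne; case: ifP => // /andP [_ /eqP Hst].
  by move: Hne; rewrite (_ : a = Ordinal Ha) ?eqxx //; apply: val_inj; rewrite /= Hst.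
case Hd: (qdec q u) => //=.
have := qdec_good _ _ Hd; rewrite /g1 /good; case: (st u) => a b /= Hg.
rewrite xpair_eqE eqxx /=.
congr (if _ then _ else _).
case: a Hg => [|a] /=; first by [].
rewrite !eqE /= => Hg.
have [H|H] := ltnP b.+1 (q*a.+1).
  by apply/esym/negbTE/negP => /eqnP E; clear -Hg H E; lia.
apply/esym/eqnP; clear -Hg H; rewrite /=; lia.
Qed.

Lemma sgn_block U a j : sgn (U ++ nseq a false ++ nseq j true) = sgn U * (-1) ^+ j.
Proof. by rewrite /sgn !count_cat !count_nseq /= mul0n add0n mul1n exprD. Qed.

Lemma S_0 n : Sa 0 n = 0.
Proof. by rewrite /Sa big_mkcond big1 // => u _; rewrite andbF. Qed.

Lemma S_zero a n : (0 < a)%N -> (n.+1 < q.+1 * a)%N -> Sa a n = 0.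
Proof.
move=> Ha Hn; rewrite /Sa big1_seq // => u /andP [/andP [_ /eqP Hst]].
rewrite mem_allw => /eqP Hs; exfalso.
move: (st_size u); rewrite Hst Hs /=.
have : (1 <= q * a)%N by rewrite muln_gt0 Hq Ha.
move: Hn; rewrite mulSn; lia.
Qed.

Lemma S_val a n : (0 < a)%N -> (q.+1 * a <= n.+1)%N ->
  Sa a n = (-1) ^+ (q * a - 1) * Vn (n.+1 - q.+1 * a).
Proof.
move=> Ha Hn.
have Hqa : (1 <= q * a)%N by rewrite muln_gt0 Hq Ha.
rewrite /Sa /Vn (@reindex_allw (n.+1 - q.+1 * a)%N n
   (fun U => U ++ nseq a false ++ nseq (q * a - 1)%N true) _
   (fun U => qdec q U && last true U)).
- rewrite mulr_sumr; apply: eq_bigr => U _.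
  by rewrite sgn_block mulrC.
- move=> U1 U2 /= H.
  have Hs : size U1 = size U2.
    by move/(congr1 size): H; rewrite !size_cat; lia.
  by move/(congr1 (take (size U1))): H; rewrite !take_size_cat.
- move=> U HU; rewrite !size_cat !size_nseq HU.
  move: Hn Hqa; rewrite mulSn; lia.
- move=> U _ /andP [HQ HU].
  rewrite qdec_block // ?HQ ?st_block // ?eqxx ?Ha //.
  lia.
move=> u Hs /andP [/andP [Hd _] /eqP Hst].
have Ha' : (0 < (st u).1)%N by rewrite Hst.
have [U [Hu HU]] := st_decomp _ Ha'.
exists U; last by rewrite Hu Hst.
move: Hd; rewrite Hu qdec_block // ?Hst //=; last by lia.
move=> ->; rewrite HU andbT andbT.
move/(congr1 size): Hu; rewrite Hs !size_cat !size_nseq Hst /=.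
move: Hn Hqa; rewrite mulSn => Hn Hqa Hsz.
apply/eqP; lia.
Qed.

End Count.


Lemma signr_pred (k : nat) : (0 < k)%N -> (-1) ^+ (k - 1) = - ((-1) ^+ k) :> int.
Proof. by case: k => // k _; rewrite subSS subn0 exprS mulN1r opprK. Qed.

Section Arith.
Variable q : nat.
Hypothesis Hq : (0 < q)%N.
Variables D V : nat -> int.

Definition c a m : int :=
  if (0 < a)%N && (q.+1 * a <= m)%N then (-1) ^+ (q * a - 1) * V (m - q.+1 * a)%N else 0.

Definition T m := \sum_(a < m) c a m.

Lemma widen m k : \sum_(a < m + k) c a m = T m.
Proof.
elim: k => [|k IH]; first by rewrite addn0.
rewrite addnS big_ord_recr /= IH /c.
case: ifP => [/andP [H1 H2]|_]; last by rewrite addr0.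
exfalso; move: H2; rewrite mulSn.
have : (m + k <= q * (m + k))%N by apply: leq_pmull.
lia.
Qed.

Lemma c_shift a m : c a.+1 (m + q.+1) =
  (-1) ^+ q * c a m + (if a == 0%N then (-1) ^+ (q - 1) * V m else 0).
Proof.
case: a => [|a].
  by rewrite /c /= muln1 leq_addl mulr0 add0r muln1 addnK.
rewrite /c /= addr0.
have E1 : (q.+1 * a.+2 <= m + q.+1)%N = (q.+1 * a.+1 <= m)%N.
  by rewrite (mulnS _ a.+1) [(m + _)%N]addnC leq_add2l.
rewrite E1; case: ifP => H; last by rewrite mulr0.
rewrite mulrA -exprD; congr (_ ^+ _ * V _).
  have : (1 <= q * a.+1)%N by rewrite muln_gt0 Hq.
  rewrite (mulnS _ a.+1); lia.
rewrite (mulnS _ a.+1); lia.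
Qed.

Lemma T_shift m : T (m + q.+1) = (-1) ^+ q * T m + (-1) ^+ (q - 1) * V m.
Proof.
rewrite /T [in LHS]addnS big_ord_recl {1}/c /= add0r.
under eq_bigr do rewrite -addnS c_shift.
rewrite big_split /= -mulr_sumr widen.
congr (_ + _).
have H0 : (0 < m + q)%N by rewrite addn_gt0 Hq orbT.
rewrite (bigD1 (Ordinal H0)) //= big1 ?addr0 // => i.
by case: i => [[|i] Hi] //.
Qed.

Lemma T_small m : (m <= q)%N -> T m = 0.
Proof.
move=> Hm; rewrite /T big1 // => [[a Ha]] _; rewrite /c /=.
case: ifP => // /andP [H1 H2]; exfalso; move: H2; rewrite mulSn.
have : (q <= q * a)%N by rewrite leq_pmulr.
lia.
Qed.

Lemma mem3 (k : nat) (x : int) : x \in [:: -1; 0; 1] -> (-1) ^+ k * x \in [:: -1; 0; 1].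
Proof.
rewrite -signr_odd; case: (odd k); rewrite ?expr0 ?expr1 ?mul1r ?mulN1r //.
by rewrite !inE => /or3P [] /eqP ->; rewrite ?opprK ?oppr0 eqxx ?orbT.
Qed.

Hypothesis D0 : D 0 = 1.
Hypothesis V0 : V 0 = 1.
Hypothesis VS : forall n, V n.+1 = D n.+1 - D n.
Hypothesis DS : forall n, D n.+1 = T n.+1.

Lemma D_in n : D n \in [:: -1; 0; 1].
Proof.
elim: n {-2}n (leqnn n) => [|N IH] n Hn.
  by move: Hn; rewrite leqn0 => /eqP ->; rewrite D0.
case: n Hn => [|n] Hn; first by rewrite D0.
have [Hsmall|Hbig] := leqP n.+1 q.
  by rewrite DS T_small.
case: (ltngtP n.+1 q.+1) => [Hlt|Hgt|Heq].
- by exfalso; move: Hlt Hbig; clear; lia.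
- have E : n.+1 = ((n - q.+1).+1 + q.+1)%N by move: Hgt; clear; lia.
  rewrite DS E T_shift -DS VS.
  have -> : (-1) ^+ (q - 1) = - ((-1) ^+ q) :> int.
    exact: signr_pred.
  rewrite mulNr -mulrN -mulrDr opprB addrC subrK.
  by apply: mem3; apply: IH; move: Hn Hgt; clear; lia.
- case: Heq => ->; rewrite DS -[q.+1]add0n T_shift /T big_ord0 mulr0 add0r V0 mulr1.
  by rewrite -[X in X \in _]mulr1; apply: mem3.
Qed.

End Arith.


Lemma qdec_nil q : qdec q [::].
Proof.
apply/qdecP => U a b V /(congr1 size); rewrite /= !size_cat size_nseq => H Ha.
by exfalso; move: H Ha; clear; lia.
Qed.

Lemma card_diff q n :
  (#|Aplus q n|%:Z - #|Aminus q n|%:Z) = Dn q n.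
Proof.
have cz (A : {set n.-tuple bool}) : (#|A|%:Z) = \sum_(t in A) 1.
  by rewrite sumr_const -natz.
rewrite !cz /Dn [RHS]big_mkcond -sum_tuple.
rewrite [X in X - _]big_mkcond [X in _ - X]big_mkcond -sumrB.
apply: eq_bigr => t _; rewrite /Aplus /Aminus /Wq !inE /sgn -signr_odd.
by case: (qdec q t); case: (odd _); rewrite ?subr0 ?sub0r.
Qed.

Theorem corollary1 (n q : nat) (hq : (1 <= q)%N) :
  (#|Aplus q n|%:Z - #|Aminus q n|%:Z) \in [:: -1; 0; 1].
Proof.
rewrite card_diff.
apply: (D_in q hq (Dn q) (Vn q)).
- by rewrite /Dn /= big_cons big_nil qdec_nil addr0.
- by rewrite /Vn /= big_cons big_nil qdec_nil addr0.
- exact: V_D.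
move=> m; rewrite D_X // X_sum // /T; apply: eq_bigr => [[a Ha]] _ /=.
rewrite /c; case: (posnP a) => [->|apos]; first by rewrite S_0.
case: leqP => H /=; first by rewrite S_val.
by rewrite S_zero.
Qed.
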